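(* Let $(\mathcal{M},\delta)$ be a path-connected metric space and let $P\subset\mathcal{M}$ be a finite set with $|P|\ge 2$. Then $GR_P\ge 1$.
   Context: For a metric space $(\mathcal{M},\delta)$ and a finite set $P\subset\mathcal{M}$ with $|P|\ge 2$, define $r_P=\min_{p,q\in P,\,p\neq q}\delta(p,q)/2$, $R_P=\sup_{x\in\mathcal{M}}\min_{p\in P}\delta(x,p)$, and the gap ratio $GR_P=R_P/r_P$. *)

(* Defs.v *)
From mathcomp Require Import all_boot all_order all_algebra.
From mathcomp Require Import all_classical all_reals ereal.
Set Implicit Arguments. Unset Strict Implicit. Unset Printing Implicit Defensive.
Import Order.TTheory GRing.Theory Num.Theory.
Local Open Scope classical_set_scope.
Local Open Scope ring_scope.

Section Defs.
Variables (R : realType) (T : Type).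

Definition is_metric (d : T -> T -> R) : Prop :=
  [/\ forall x y, 0 <= d x y,
      forall x y, d x y = 0 <-> x = y,
      forall x y, d x y = d y x &
      forall x y z, d x z <= d x y + d y z].

(* gamma : [0,1] -> T is continuous w.r.t. the usual topology on [0,1]
   and the metric topology of d (only values on [0,1] matter) *)
Definition path_cont (d : T -> T -> R) (gamma : R -> T) : Prop :=
  forall t, 0 <= t <= 1 -> forall e, 0 < e -> exists2 del, 0 < del &
    forall s, 0 <= s <= 1 -> `|s - t| < del -> d (gamma s) (gamma t) < e.

Definition path_connected (d : T -> T -> R) : Prop :=
  forall x y, exists gamma : R -> T,
    [/\ path_cont d gamma, gamma 0 = x & gamma 1 = y].

Definition r_P (d : T -> T -> R) (P : set T) : R :=
  inf [set r | exists p q, [/\ P p, P q, p <> q & r = d p q / 2]].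

Definition dist_to (d : T -> T -> R) (P : set T) (x : T) : R :=
  inf [set d x p | p in P].

Definition R_P (d : T -> T -> R) (P : set T) : \bar R :=
  ereal_sup [set (dist_to d P x)%:E | x in [set: T]].

Definition GR_P (d : T -> T -> R) (P : set T) : \bar R :=
  (R_P d P * ((r_P d P)^-1)%:E)%E.

End Defs.

(* Main.v *)
Require Import Defs.
From mathcomp Require Import all_boot all_order all_algebra.
From mathcomp Require Import all_classical all_reals ereal.
From mathcomp Require Import topology normedtype.
From mathcomp Require Import lra.
Import Order.TTheory GRing.Theory Num.Theory.
Import numFieldNormedType.Exports.
Local Open Scope classical_set_scope.
Local Open Scope ring_scope.

Lemma seq_pos_lb (R : realType) (s : seq R) :
  exists2 e : R, 0 < e & forall x, x \in s -> 0 < x -> e <= x.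
Proof.
elim: s => [|a s [e e0 He]]; first by exists 1 => //.
have [a0|a0] := ltP 0 a.
  exists (Order.min e a); first by rewrite lt_min e0 a0.
  move=> x; rewrite inE => /orP[/eqP->|xs] x0; first by rewrite ge_min lexx orbT.
  by rewrite ge_min He.
exists e => // x; rewrite inE => /orP[/eqP->|xs] x0; first by rewrite ltNge a0 in x0.
exact: He.
Qed.

Lemma min_lip (R : realType) (a b c : R) :
  `|Num.min a c - Num.min b c| <= `|a - b|.
Proof.
have e0 := normr_ge0 (a - b).
rewrite ler_distl.
case: (leP a c) => h1; case: (leP b c) => h2;
  have e1 := ler_norm (a - b); (have e2 : b - a <= `|a - b| by rewrite distrC ler_norm);
  apply/andP; split; lra.
Qed.

Lemma max_lip (R : realType) (a b c : R) :
  `|Num.max c a - Num.max c b| <= `|a - b|.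
Proof.
have e0 := normr_ge0 (a - b).
rewrite ler_distl.
case: (leP c a) => h1; case: (leP c b) => h2;
  have e1 := ler_norm (a - b); (have e2 : b - a <= `|a - b| by rewrite distrC ler_norm);
  apply/andP; split; lra.
Qed.

Lemma finite_pos_lb (R : realType) (S : set R) : finite_set S ->
  exists2 e : R, 0 < e & forall x, S x -> 0 < x -> e <= x.
Proof.
move=> /finite_fsetP[X ->]; have [e e0 He] := @seq_pos_lb R (finmap.enum_fset X).
by exists e => // x /= xX; apply: He.
Qed.

Theorem lemma1 (R : realType) (T : Type) (d : T -> T -> R) (P : set T) :
  is_metric d -> path_connected d ->
  finite_set P -> (exists p q, P p /\ P q /\ p <> q) ->
  (1 <= GR_P d P)%E.
Proof.
move=> [d0 dE dsym dtri] pc fP [p [q [Pp [Pq pq]]]].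
set r := r_P d P.
set S := [set r | exists p q, [/\ P p, P q, p <> q & r = d p q / 2]].
have Sne : S (d p q / 2) by exists p, q.
have Slb : has_lbound S.
  by exists 0 => _ [a [b [_ _ _ ->]]]; rewrite divr_ge0.
have rle : forall a b, P a -> P b -> a <> b -> r <= d a b / 2.
  by move=> a b Pa Pb ab; apply: ge_inf => //; exists a, b.
have rpos : 0 < r.
  have fD : finite_set [set d x y | x in P & y in P] by exact: finite_image2.
  have [e e0 He] := @finite_pos_lb R _ fD.
  apply: (@lt_le_trans _ _ (e / 2)); first by rewrite divr_gt0.
  apply: lb_le_inf; first by exists (d p q / 2).
  move=> _ [a [b [Pa Pb ab ->]]]; rewrite ler_pM2r ?invr_gt0 //.
  apply: He; first by exists a => //; exists b.
  by rewrite lt_neqAle d0 andbT eq_sym; apply/eqP => /dE.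
have [g [gc g0 g1]] := pc p q.
pose cl (t : R) := Order.max 0 (Order.min t 1).
have cl01 t : 0 <= cl t <= 1.
  by rewrite /cl le_max lexx /= ge_max ler01 /= ge_min lexx orbT.
have cllip s t : `|cl s - cl t| <= `|s - t|.
  rewrite /cl; have := @max_lip R (Num.min s 1) (Num.min t 1) 0.
  have := @min_lip R s t 1. move=> *; apply: le_trans; eassumption.
pose f (t : R) := d (g (cl t)) p.
have fc : continuous f.
  move=> t; apply/cvgrPdist_lt => e e0.
  have [del del0 H] := gc (cl t) (cl01 t) e e0.
  apply/nbhs_ballP; exists del => // s; rewrite /ball_ /= => ts.
  have hs := H (cl s) (cl01 s) (le_lt_trans (cllip s t) _).
  have := hs; rewrite distrC in ts => /(_ ts) h.
  have t1 := dtri (g (cl s)) (g (cl t)) p.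
  have t2 := dtri (g (cl t)) (g (cl s)) p.
  rewrite (dsym (g (cl t)) (g (cl s))) in t2.
  rewrite /f ltr_distl; apply/andP; split; lra.
have f0 : f 0 = 0.
  by rewrite /f /cl /Order.min /Order.max /= ltr01 ltxx g0; apply/dE.
have f1 : f 1 = d q p.
  by rewrite /f /cl /Order.min /Order.max /= ltxx ltr01 g1.
have rq : r <= d q p.
  have := rle p q Pp Pq pq; rewrite dsym; have := d0 q p; lra.
have [c _ fcr] : exists2 c, c \in `[0, 1] & f c = r.
  apply: IVT; first exact: ler01.
    exact: continuous_subspaceT.
  rewrite f0 f1 (min_l (d0 q p)) (max_r (d0 q p)).
  by rewrite (ltW rpos) rq.
set x := g (cl c).
have distx : r <= dist_to d P x.
  apply: lb_le_inf; first by exists (d x p); exists p.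
  move=> _ [p' Pp' <-].
  have [->|pp'] := pselect (p' = p); first by rewrite -fcr.
  have h := rle p p' Pp Pp' (nesym pp').
  have t3 := dtri p x p'; have fx : d p x = r by rewrite dsym -fcr.
  lra.
have RPr : (r%:E <= R_P d P)%E.
  apply: (@le_trans _ _ (dist_to d P x)%:E); first by rewrite lee_fin.
  by apply: ereal_sup_ubound; exists x.
rewrite /GR_P -/r.
apply: (@le_trans _ _ (r%:E * r^-1%:E)%E).
  by rewrite -EFinM divff ?gt_eqF.
by apply: lee_wpmul2r => //; rewrite lee_fin invr_ge0 ltW.
Qed.
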